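(* Assume $\mathfrak g$ is noncompact and has no nonzero proper $\sigma$-stable ideals. Then every root $\alpha\in\Sigma$ with $\mathfrak k_\mathbb C(\mathfrak t,\alpha)\ne\{0\}$ can be written as $\alpha=\beta+\gamma$ with $\beta,\gamma\in\Sigma(\mathfrak m_\mathbb C,\mathfrak t)\cup\{0\}$.
   Context: Let $G$ be a connected real semisimple Lie group with Lie algebra $\mathfrak g$. Let $\sigma$ be an involution of $G$ and $\theta$ a Cartan involution with $\sigma\theta=\theta\sigma$; the same letters denote the induced involutions of $\mathfrak g$. Let $\mathfrak g=\mathfrak k\oplus\mathfrak m$ and $\mathfrak g=\mathfrak h\oplus\mathfrak q$ be the $\pm1$-eigenspace decompositions for $\theta$ and $\sigma$. Let $\mathfrak t$ be a maximal abelian subspace of $\mathfrak k\cap\mathfrak q$. For a linear form $\alpha:\mathfrak t\to i\mathbb R$ put - $\mathfrak g_\mathbb C(\mathfrak t,\alpha)=\{X\in\mathfrak g_\mathbb C\mid[Y,X]=\alpha(Y)X\ \forall Y\in\mathfrak t\}$, - $\mathfrak k_\mathbb C(\mathfrak t,\alpha)=\mathfrak g_\mathbb C(\mathfrak t,\alpha)\cap\mathfrak k_\mathbb C$, - $\mathfrak m_\mathbb C(\mathfrak t,\alpha)=\mathfrak g_\mathbb C(\mathfrak t,\alpha)\cap\mathfrak m_\mathbb C$. Let $\Sigma=\{\alpha\neq0\mid\mathfrak g_\mathbb C(\mathfrak t,\alpha)\ne\{0\}\}$ and $\Sigma(\mathfrak m_\mathbb C,\mathfrak t)=\{\alpha\ne0\mid\mathfrak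 m_\mathbb C(\mathfrak t,\alpha)\ne\{0\}\}$. *)

(* Defs.v *)
From HB Require Import structures.
From mathcomp Require Import all_boot all_order all_algebra.
From mathcomp Require Import reals.
From mathcomp.real_closed Require Import complex.
Set Implicit Arguments. Unset Strict Implicit. Unset Printing Implicit Defensive.
Import Order.TTheory GRing.Theory Num.Theory.
Local Open Scope ring_scope.
Local Open Scope complex_scope.

(* A real Lie algebra of dimension n is modelled on R^n ('rV[R]_n) by its
   structure constants c i j k : [e_i, e_j] = \sum_k c i j k e_k.
   The same constants define the bracket of the complexification C^n. *)

Section LieDefs.
Variable R : realType.
Variable n : nat.
Local Notation C := (complex R).

Definition cst := 'I_n -> 'I_n -> 'I_n -> R.

Definition lbr_gen (F : comNzRingType) (c : 'I_n -> 'I_n -> 'I_n -> F)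
    (x y : 'rV[F]_n) : 'rV[F]_n :=
  \row_k \sum_i \sum_j x 0 i * y 0 j * c i j k.

Definition lbr (c : cst) (x y : 'rV[R]_n) := lbr_gen c x y.

Definition lbrC (c : cst) (x y : 'rV[C]_n) :=
  lbr_gen (fun i j k => (c i j k)%:C) x y.

Definition cplx {m p} (A : 'M[R]_(m, p)) : 'M[C]_(m, p) :=
  map_mx (fun x : R => x%:C) A.

Definition is_lie (c : cst) :=
  (forall x, lbr c x x = 0) /\
  (forall x y z, lbr c x (lbr c y z) + lbr c y (lbr c z x)
                 + lbr c z (lbr c x y) = 0).

(* matrix of ad X acting on row vectors: row j is [X, e_j] *)
Definition adm (c : cst) (x : 'rV[R]_n) : 'M[R]_n :=
  \matrix_(j, k) (lbr c x (delta_mx 0 j)) 0 k.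

Definition killing (c : cst) (x y : 'rV[R]_n) : R :=
  \tr (adm c x *m adm c y).

(* semisimple: Killing form nondegenerate (Cartan's criterion / Helgason's def.) *)
Definition semisimple (c : cst) :=
  forall x, (forall y, killing c x y = 0) -> x = 0.

Definition compact_lie (c : cst) :=
  forall x, x != 0 -> killing c x x < 0.

(* linear automorphisms of g are given by matrices acting on the right *)
Definition is_aut (c : cst) (S : 'M[R]_n) :=
  S \in unitmx /\ forall x y, lbr c (x *m S) (y *m S) = lbr c x y *m S.

Definition is_invol (c : cst) (S : 'M[R]_n) := is_aut c S /\ S *m S = 1%:M.

Definition cartan_invol (c : cst) (th : 'M[R]_n) :=
  is_invol c th /\ forall x, x != 0 -> 0 < - killing c x (x *m th).

(* subspaces of g are row spaces of n x n matrices *)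
Definition ideal (c : cst) (U : 'M[R]_n) :=
  forall x y : 'rV[R]_n, (y <= U)%MS -> (lbr c x y <= U)%MS.

Definition stable (S U : 'M[R]_n) :=
  forall y : 'rV[R]_n, (y <= U)%MS -> (y *m S <= U)%MS.

Definition no_sigma_ideals (c : cst) (sg : 'M[R]_n) :=
  forall U : 'M[R]_n, ideal c U -> stable sg U ->
    \rank U = 0%N \/ \rank U = n.

Definition in_kq (th sg : 'M[R]_n) (y : 'rV[R]_n) :=
  y *m th = y /\ y *m sg = - y.

Definition abelian_sub (c : cst) (U : 'M[R]_n) :=
  forall y z : 'rV[R]_n, (y <= U)%MS -> (z <= U)%MS -> lbr c y z = 0.

Definition sub_kq (th sg U : 'M[R]_n) :=
  forall y : 'rV[R]_n, (y <= U)%MS -> in_kq th sg y.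

Definition max_abelian_kq (c : cst) (th sg T : 'M[R]_n) :=
  sub_kq th sg T /\ abelian_sub c T /\
  forall U : 'M[R]_n, (T <= U)%MS -> sub_kq th sg U -> abelian_sub c U ->
    (U <= T)%MS.

(* a : t -> iR linear form (given by its values on vectors of t) *)
Definition lin_form (T : 'M[R]_n) (a : 'rV[R]_n -> C) :=
  (forall y z : 'rV[R]_n, (y <= T)%MS -> (z <= T)%MS -> a (y + z) = a y + a z) /\
  (forall (r : R) (y : 'rV[R]_n), (y <= T)%MS -> a (r *: y) = r%:C * a y) /\
  (forall y : 'rV[R]_n, (y <= T)%MS -> complex.Re (a y) = 0).

Definition form_zero (T : 'M[R]_n) (a : 'rV[R]_n -> C) :=
  forall y : 'rV[R]_n, (y <= T)%MS -> a y = 0.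

Definition in_gC (c : cst) (T : 'M[R]_n) (a : 'rV[R]_n -> C) (x : 'rV[C]_n) :=
  forall y : 'rV[R]_n, (y <= T)%MS -> lbrC c (cplx y) x = a y *: x.

Definition gC_nz c T a := exists x, x != 0 /\ in_gC c T a x.
Definition kC_nz c (th : 'M[R]_n) T a :=
  exists x, x != 0 /\ in_gC c T a x /\ x *m cplx th = x.
Definition mC_nz c (th : 'M[R]_n) T a :=
  exists x, x != 0 /\ in_gC c T a x /\ x *m cplx th = - x.

Definition in_Sigma c T a := lin_form T a /\ ~ form_zero T a /\ gC_nz c T a.
Definition in_Sigma_m c th T a :=
  lin_form T a /\ ~ form_zero T a /\ mC_nz c th T a.

End LieDefs.

(* Main.v *)
Require Import Defs.
From HB Require Import structures.
From mathcomp Require Import all_boot all_order all_algebra.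
From mathcomp Require Import reals.
From mathcomp.real_closed Require Import complex.
From Stdlib Require Import Classical ClassicalEpsilon.
From mathcomp Require Import zify.
Set Implicit Arguments. Unset Strict Implicit. Unset Printing Implicit Defensive.
Import Order.TTheory GRing.Theory Num.Theory.
Local Open Scope ring_scope.


Definition admg (F : comNzRingType) (n : nat) (cc : 'I_n -> 'I_n -> 'I_n -> F)
  (x : 'rV[F]_n) : 'M[F]_n := \matrix_(j, k) \sum_i x 0 i * cc i j k.

Lemma lbr_admg (F : comNzRingType) (n : nat) (cc : 'I_n -> 'I_n -> 'I_n -> F) x y :
  lbr_gen cc x y = y *m admg cc x.
Proof.
apply/rowP => k; rewrite !mxE exchange_big /=; apply: eq_bigr => j _.
rewrite !mxE mulr_sumr; apply: eq_bigr => i _; rewrite mulrCA mulrA.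
by [].
Qed.

Lemma admgD (F : comNzRingType) (n : nat) (cc : 'I_n -> 'I_n -> 'I_n -> F) x y :
  admg cc (x + y) = admg cc x + admg cc y.
Proof.
by apply/matrixP => j k; rewrite !mxE -big_split; apply: eq_bigr => i _; rewrite !mxE mulrDl.
Qed.

Lemma admgZ (F : comNzRingType) (n : nat) (cc : 'I_n -> 'I_n -> 'I_n -> F) a x :
  admg cc (a *: x) = a *: admg cc x.
Proof.
by apply/matrixP => j k; rewrite !mxE mulr_sumr; apply: eq_bigr => i _; rewrite !mxE mulrA.
Qed.

Lemma admg0 (F : comNzRingType) (n : nat) (cc : 'I_n -> 'I_n -> 'I_n -> F) :
  admg cc 0 = 0.
Proof. by apply/matrixP => j k; rewrite !mxE big1 // => i _; rewrite mxE mul0r. Qed.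

Lemma admgN (F : comNzRingType) (n : nat) (cc : 'I_n -> 'I_n -> 'I_n -> F) x :
  admg cc (- x) = - admg cc x.
Proof. by rewrite -scaleN1r admgZ scaleN1r. Qed.

Lemma admgB (F : comNzRingType) (n : nat) (cc : 'I_n -> 'I_n -> 'I_n -> F) x y :
  admg cc (x - y) = admg cc x - admg cc y.
Proof. by rewrite admgD admgN. Qed.

Lemma admg_sum (F : comNzRingType) (n : nat) (cc : 'I_n -> 'I_n -> 'I_n -> F)
   (I : Type) (r : seq I) (P : pred I) (f : I -> 'rV[F]_n) :
  admg cc (\sum_(i <- r | P i) f i) = \sum_(i <- r | P i) admg cc (f i).
Proof. exact: (big_morph _ (admgD cc) (admg0 cc)). Qed.

Lemma admg_expand (F : comNzRingType) (n : nat) (cc : 'I_n -> 'I_n -> 'I_n -> F) x :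
  admg cc x = \sum_i x 0 i *: admg cc (delta_mx 0 i).
Proof.
transitivity (admg cc (\sum_i x 0 i *: delta_mx 0 i)); last first.
  by rewrite admg_sum; apply: eq_bigr => i _; rewrite admgZ.
congr admg; apply/rowP => k; rewrite summxE.
rewrite (bigD1 k) //= big1 => [|i ik]; rewrite !mxE.
  by rewrite !eqxx mulr1 addr0.
by rewrite eq_sym (negbTE ik) andbF mulr0.
Qed.

Definition cmap (R : realType) m p (A : 'M[R]_(m, p)) : 'M[R[i]]_(m, p) :=
  map_mx (fun x : R => (x%:C)%C) A.

Lemma cplxE (R : realType) m p (A : 'M[R]_(m, p)) : cplx A = cmap A.
Proof. by []. Qed.

Lemma adm_admg (R : realType) n (c : cst R n) x : adm c x = admg c x.
Proof.
apply/matrixP => j k; rewrite /adm mxE /lbr lbr_admg -rowE mxE.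
by [].
Qed.

Lemma lbr_adm (R : realType) n (c : cst R n) x y : lbr c x y = y *m adm c x.
Proof. by rewrite adm_admg /lbr lbr_admg. Qed.

Definition ccC (R : realType) n (c : cst R n) : 'I_n -> 'I_n -> 'I_n -> R[i] :=
  fun i j k => ((c i j k)%:C)%C.

Definition admC (R : realType) n (c : cst R n) (u : 'rV[R[i]]_n) := admg (ccC c) u.

Lemma lbrC_admC (R : realType) n (c : cst R n) u v : lbrC c u v = v *m admC c u.
Proof. by rewrite /lbrC lbr_admg. Qed.

Lemma admC_cplx (R : realType) n (c : cst R n) x : admC c (cplx x) = cplx (adm c x).
Proof.
apply/matrixP => j k; rewrite adm_admg !mxE rmorph_sum; apply: eq_bigr => i _.
by rewrite !mxE rmorphM.
Qed.

Lemma cplxM (R : realType) m p q (A : 'M[R]_(m, p)) (B : 'M[R]_(p, q)) :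
  cplx (A *m B) = cplx A *m cplx B.
Proof. exact: map_mxM. Qed.

Lemma cplxD (R : realType) m p (A B : 'M[R]_(m, p)) : cplx (A + B) = cplx A + cplx B.
Proof. exact: map_mxD. Qed.

Lemma cplxN (R : realType) m p (A : 'M[R]_(m, p)) : cplx (- A) = - cplx A.
Proof. exact: map_mxN. Qed.

Lemma cplxZ (R : realType) m p (a : R) (A : 'M[R]_(m, p)) : cplx (a *: A) = (a%:C)%C *: cplx A.
Proof. by apply/matrixP => i j; rewrite !mxE rmorphM. Qed.

Lemma cplx0 (R : realType) m p : cplx (0 : 'M[R]_(m, p)) = 0.
Proof. exact: map_mx0. Qed.

Lemma cplx1 (R : realType) p : cplx (1%:M : 'M[R]_p) = 1%:M.
Proof. exact: map_mx1. Qed.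

Lemma cplx_delta (R : realType) n (i : 'I_n) : cplx (delta_mx 0 i : 'rV[R]_n) = delta_mx 0 i.
Proof. by apply/matrixP => a b; rewrite !mxE; case: (_ && _). Qed.

Lemma lbrC_cplx (R : realType) n (c : cst R n) x y :
  lbrC c (cplx x) (cplx y) = cplx (lbr c x y).
Proof. by rewrite lbrC_admC admC_cplx lbr_adm cplxM. Qed.

Lemma rows_eq (F : comNzRingType) n p (M N : 'M[F]_(n, p)) :
  (forall v : 'rV[F]_n, v *m M = v *m N) -> M = N.
Proof. by move=> H; apply/row_matrixP => i; rewrite !rowE H. Qed.

Lemma lbrDr (R : realType) n (c : cst R n) x y z : lbr c x (y + z) = lbr c x y + lbr c x z.
Proof. by rewrite !lbr_adm mulmxDl. Qed.
Lemma lbrDl (R : realType) n (c : cst R n) x y z : lbr c (x + y) z = lbr c x z + lbr c y z.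
Proof. by rewrite !lbr_adm !adm_admg admgD mulmxDr. Qed.
Lemma lbrNr (R : realType) n (c : cst R n) x y : lbr c x (- y) = - lbr c x y.
Proof. by rewrite !lbr_adm mulNmx. Qed.

Lemma lbr_anti (R : realType) n (c : cst R n) : is_lie c ->
  forall x y, lbr c x y = - lbr c y x.
Proof.
move=> [alt _] x y; have := alt (x + y).
rewrite lbrDl !lbrDr !alt add0r addr0 => /eqP; rewrite addr_eq0 => /eqP.
by [].
Qed.

Lemma adm_der (R : realType) n (c : cst R n) : is_lie c ->
  forall u Y, adm c u *m adm c Y = adm c (u *m adm c Y) + adm c Y *m adm c u.
Proof.
move=> L u Y; apply: rows_eq => v.
have J := (proj2 L) Y u v.
rewrite mulmxDr !mulmxA -!lbr_adm.
rewrite (lbr_anti L v Y) lbrNr (lbr_anti L v (lbr c Y u)) in J.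
apply/eqP; rewrite -subr_eq0 -J opprD addrA.
by rewrite [X in X == _]addrAC.
Qed.

Lemma admC_sum_delta (R : realType) n (c : cst R n) w :
  admC c w = \sum_i w 0 i *: cplx (adm c (delta_mx 0 i)).
Proof.
rewrite /admC admg_expand; apply: eq_bigr => i _.
by rewrite -(cplx_delta R) -/(admC c _) admC_cplx.
Qed.

Lemma admC_der (R : realType) n (c : cst R n) : is_lie c ->
  forall (u : 'rV[R[i]]_n) Y,
  admC c u *m cplx (adm c Y) = admC c (u *m cplx (adm c Y)) + cplx (adm c Y) *m admC c u.
Proof.
move=> L u Y.
rewrite [u in u *m cplx _]row_sum_delta mulmx_suml.
rewrite /admC admg_sum -!/(admC c _) !admC_sum_delta mulmx_suml mulmx_sumr -big_split /=.
apply: eq_bigr => i _.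
rewrite -scalemxAl -scalemxAr /admC admgZ -/(admC c _) -scalemxAl -scalerDr.
congr (_ *: _).
by rewrite -(cplx_delta R) -cplxM admC_cplx -!cplxM -cplxD adm_der.
Qed.

Lemma adm_aut (R : realType) n (c : cst R n) S : is_aut c S -> S *m S = 1%:M ->
  forall x, adm c (x *m S) = S *m adm c x *m S.
Proof.
move=> [_ HS] SS x; apply: rows_eq => v.
rewrite -lbr_adm -{1}[v]mulmx1 -SS mulmxA HS lbr_adm !mulmxA.
by [].
Qed.

Lemma killingDl (R : realType) n (c : cst R n) x y z :
  killing c (x + y) z = killing c x z + killing c y z.
Proof. by rewrite /killing !adm_admg admgD mulmxDl mxtraceD. Qed.
Lemma killingDr (R : realType) n (c : cst R n) x y z :
  killing c z (x + y) = killing c z x + killing c z y.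
Proof. by rewrite /killing !adm_admg admgD mulmxDr mxtraceD. Qed.
Lemma killingZl (R : realType) n (c : cst R n) a x z :
  killing c (a *: x) z = a * killing c x z.
Proof. by rewrite /killing !adm_admg admgZ -scalemxAl mxtraceZ. Qed.
Lemma killingZr (R : realType) n (c : cst R n) a x z :
  killing c z (a *: x) = a * killing c z x.
Proof. by rewrite /killing !adm_admg admgZ -scalemxAr mxtraceZ. Qed.
Lemma killing0l (R : realType) n (c : cst R n) z : killing c 0 z = 0.
Proof. by have := killingZl c 0 0 z; rewrite scale0r mul0r. Qed.
Lemma killing0r (R : realType) n (c : cst R n) z : killing c z 0 = 0.
Proof. by have := killingZr c 0 0 z; rewrite scale0r mul0r. Qed.
Lemma killing_suml (R : realType) n (c : cst R n) (I : Type) (r : seq I) (P : pred I) f z :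
  killing c (\sum_(i <- r | P i) f i) z = \sum_(i <- r | P i) killing c (f i) z.
Proof. exact: (big_morph (fun x => killing c x z) (fun x y => killingDl c x y z) (killing0l c z)). Qed.
Lemma killing_sumr (R : realType) n (c : cst R n) (I : Type) (r : seq I) (P : pred I) f z :
  killing c z (\sum_(i <- r | P i) f i) = \sum_(i <- r | P i) killing c z (f i).
Proof. exact: (big_morph (fun x => killing c z x) (fun x y => killingDr c x y z) (killing0r c z)). Qed.

Lemma killing_inv (R : realType) n (c : cst R n) : is_lie c ->
  forall x Y z, killing c (x *m adm c Y) z = - killing c x (z *m adm c Y).
Proof.
move=> L x Y z; rewrite /killing.
have D1 := adm_der L x Y; have D2 := adm_der L z Y.
have E1 : adm c (x *m adm c Y) = adm c x *m adm c Y - adm c Y *m adm c x.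
  by rewrite D1 addrK.
have E2 : adm c (z *m adm c Y) = adm c z *m adm c Y - adm c Y *m adm c z.
  by rewrite D2 addrK.
rewrite E1 E2 mulmxBl mulmxBr !mxtraceD !raddfN /= opprB.
rewrite -!mulmxA; congr (_ - _).
by rewrite mxtrace_mulC -mulmxA.
Qed.

Lemma killing_aut (R : realType) n (c : cst R n) S : is_aut c S -> S *m S = 1%:M ->
  forall x y, killing c (x *m S) (y *m S) = killing c x y.
Proof.
move=> HS SS x y; rewrite /killing !adm_aut //.
rewrite -!mulmxA (mulmxA S S) SS mul1mx mxtrace_mulC -!mulmxA SS mulmx1.
by [].
Qed.

Definition Bt (R : realType) n (c : cst R n) (th : 'M[R]_n) x y := - killing c x (y *m th).
Definition Pm (R : realType) n (c : cst R n) (th : 'M[R]_n) : 'M[R]_n :=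
  \matrix_(i, j) Bt c th (delta_mx 0 i) (delta_mx 0 j).

Lemma Bt_mat (R : realType) n (c : cst R n) th x y :
  Bt c th x y = (x *m Pm c th *m y^T) 0 0.
Proof.
rewrite /Bt -mulmxA mxE {1}[x]row_sum_delta killing_suml -sumrN; apply: eq_bigr => i _.
rewrite killingZl mxE {1}[y]row_sum_delta mulmx_suml killing_sumr -mulrN -sumrN.
rewrite [LHS]big_distrr [RHS]big_distrr /=; apply: eq_bigr => j _.
by rewrite -scalemxAl killingZr !mxE /Bt !mulrN mulNr mulrN (mulrC (y 0 j)).
Qed.

Lemma killingC (R : realType) n (c : cst R n) x y : killing c x y = killing c y x.
Proof. by rewrite /killing mxtrace_mulC. Qed.

Lemma Bt_sym (R : realType) n (c : cst R n) th : is_invol c th ->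
  forall x y, Bt c th x y = Bt c th y x.
Proof.
move=> [Ha Hs] x y; rewrite /Bt -(killing_aut Ha Hs x) -mulmxA Hs mulmx1.
by rewrite killingC.
Qed.

Lemma bil_entry (F : comNzRingType) n (M : 'M[F]_n) i j :
  ((delta_mx 0 i : 'rV[F]_n) *m M *m (delta_mx 0 j : 'rV[F]_n)^T) 0 0 = M i j.
Proof. by rewrite -(rowE i M) trmx_delta -(colE j (row i M)) mxE [row _ _ _ _]mxE. Qed.


Lemma bil_eq (F : comNzRingType) n (M N : 'M[F]_n) :
  (forall x y : 'rV[F]_n, (x *m M *m y^T) 0 0 = (x *m N *m y^T) 0 0) -> M = N.
Proof. by move=> H; apply/matrixP => i j; rewrite -(bil_entry M i j) -(bil_entry N i j) H. Qed.

Lemma Pm_sym (R : realType) n (c : cst R n) th : is_invol c th -> (Pm c th)^T = Pm c th.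
Proof.
move=> I; apply/matrixP => i j; rewrite mxE [Pm c th j i]mxE [Pm c th i j]mxE.
exact: Bt_sym.
Qed.

Lemma adm_comm_th (R : realType) n (c : cst R n) th Y : is_invol c th -> Y *m th = Y ->
  th *m adm c Y = adm c Y *m th.
Proof.
move=> [Ha Hs] HY; have E := adm_aut Ha Hs Y; rewrite HY in E.
by rewrite {2}E -mulmxA Hs mulmx1.
Qed.

Lemma Bt_skew (R : realType) n (c : cst R n) th Y : is_lie c -> is_invol c th -> Y *m th = Y ->
  forall x y, Bt c th (x *m adm c Y) y = - Bt c th x (y *m adm c Y).
Proof.
move=> L I HY x y; rewrite /Bt killing_inv // opprK.
by rewrite opprK -mulmxA adm_comm_th // mulmxA.
Qed.

Lemma Pm_skew (R : realType) n (c : cst R n) th Y : is_lie c -> is_invol c th -> Y *m th = Y ->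
  adm c Y *m Pm c th = - (Pm c th *m (adm c Y)^T).
Proof.
move=> L I HY; apply: bil_eq => x y.
rewrite mulmxA -Bt_mat Bt_skew // Bt_mat trmx_mul !mulmxA mulmxN mulNmx.
by rewrite !mulmxA [in RHS]mxE.
Qed.

Definition cj (R : realType) m p (A : 'M[R[i]]_(m, p)) := map_mx Num.conj A.

Definition HH (R : realType) n (c : cst R n) th (p q : 'rV[R[i]]_n) : R[i] :=
  (p *m cplx (Pm c th) *m (cj q)^T) 0 0.

Lemma cj_cplx (R : realType) m p (A : 'M[R]_(m, p)) : cj (cplx A) = cplx A.
Proof. by apply/matrixP => i j; rewrite !mxE; apply: conjc_real. Qed.

Lemma cjM (R : realType) m p q (A : 'M[R[i]]_(m, p)) (B : 'M[R[i]]_(p, q)) :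
  cj (A *m B) = cj A *m cj B.
Proof. exact: map_mxM. Qed.
Lemma cjD (R : realType) m p (A B : 'M[R[i]]_(m, p)) : cj (A + B) = cj A + cj B.
Proof. exact: map_mxD. Qed.
Lemma cjZ (R : realType) m p a (A : 'M[R[i]]_(m, p)) : cj (a *: A) = a^* *: cj A.
Proof. by apply/matrixP => i j; rewrite !mxE rmorphM. Qed.

Lemma HH_skew (R : realType) n (c : cst R n) th Y : is_lie c -> is_invol c th -> Y *m th = Y ->
  forall p q, HH c th (p *m cplx (adm c Y)) q = - HH c th p (q *m cplx (adm c Y)).
Proof.
move=> L I HY p q; rewrite /HH -(mulmxA p) -cplxM Pm_skew // cplxN cplxM.
rewrite cjM cj_cplx trmx_mul map_trmx mulmxN mulNmx !mulmxA.
by rewrite map_trmx [in LHS]mxE.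
Qed.

Lemma HHDl (R : realType) n (c : cst R n) th p1 p2 q :
  HH c th (p1 + p2) q = HH c th p1 q + HH c th p2 q.
Proof. by rewrite /HH !mulmxDl mxE. Qed.
Lemma HHZl (R : realType) n (c : cst R n) th a p q :
  HH c th (a *: p) q = a * HH c th p q.
Proof. by rewrite /HH -!scalemxAl mxE. Qed.
Lemma HHDr (R : realType) n (c : cst R n) th p q1 q2 :
  HH c th p (q1 + q2) = HH c th p q1 + HH c th p q2.
Proof. by rewrite /HH cjD linearD /= mulmxDr mxE. Qed.
Lemma HHZr (R : realType) n (c : cst R n) th a p q :
  HH c th p (a *: q) = a^* * HH c th p q.
Proof. by rewrite /HH cjZ linearZ /= -scalemxAr mxE. Qed.
Lemma HH0r (R : realType) n (c : cst R n) th p : HH c th p 0 = 0.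
Proof. by have := HHZr c th 0 p 0; rewrite scale0r rmorph0 mul0r. Qed.
Lemma HH0l (R : realType) n (c : cst R n) th p : HH c th 0 p = 0.
Proof. by have := HHZl c th 0 0 p; rewrite scale0r mul0r. Qed.
Lemma HH_sumr (R : realType) n (c : cst R n) th (I : Type) (r : seq I) (P : pred I) f p :
  HH c th p (\sum_(i <- r | P i) f i) = \sum_(i <- r | P i) HH c th p (f i).
Proof. exact: (big_morph (fun x => HH c th p x) (fun x y => HHDr c th p x y) (HH0r c th p)). Qed.

Definition ss (F : comNzRingType) n (M : 'M[F]_n) (u v : 'rV[F]_n) := (u *m M *m v^T) 0 0.
Lemma ssDl (F : comNzRingType) n (M : 'M[F]_n) u1 u2 v : ss M (u1 + u2) v = ss M u1 v + ss M u2 v.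
Proof. by rewrite /ss !mulmxDl mxE. Qed.
Lemma ssDr (F : comNzRingType) n (M : 'M[F]_n) u v1 v2 : ss M u (v1 + v2) = ss M u v1 + ss M u v2.
Proof. by rewrite /ss linearD /= mulmxDr mxE. Qed.
Lemma ssZl (F : comNzRingType) n (M : 'M[F]_n) a u v : ss M (a *: u) v = a * ss M u v.
Proof. by rewrite /ss -!scalemxAl mxE. Qed.
Lemma ssZr (F : comNzRingType) n (M : 'M[F]_n) a u v : ss M u (a *: v) = a * ss M u v.
Proof. by rewrite /ss linearZ /= -scalemxAr mxE. Qed.
Lemma ssNr (F : comNzRingType) n (M : 'M[F]_n) u v : ss M u (- v) = - ss M u v.
Proof. by rewrite -scaleN1r ssZr mulN1r. Qed.
Lemma ss_sym (F : comNzRingType) n (M : 'M[F]_n) u v : M^T = M -> ss M u v = ss M v u.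
Proof.
move=> HM; rewrite /ss.
have -> : (u *m M *m v^T) 0 0 = ((u *m M *m v^T)^T) 0 0 by rewrite [in RHS]mxE.
by rewrite !trmx_mul trmxK HM mulmxA.
Qed.

Lemma HH_ss (R : realType) n (c : cst R n) th p q : HH c th p q = ss (cplx (Pm c th)) p (cj q).
Proof. by []. Qed.

Lemma ss_cplx (R : realType) n (M : 'M[R]_n) a b : ss (cplx M) (cplx a) (cplx b) = ((ss M a b)%:C)%C.
Proof.
rewrite /ss; have -> : (cplx b)^T = cplx (b^T) by rewrite /cplx map_trmx.
by rewrite -!cplxM mxE.
Qed.

Lemma HH_nz (R : realType) n (c : cst R n) th : cartan_invol c th ->
  forall p, p != 0 -> HH c th p p != 0.
Proof.
move=> [I pos] p p0.
set a := map_mx (@complex.Re R) p; set b := map_mx (@complex.Im R) p.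
have Ep : p = cplx a + 'i *: cplx b.
  by apply/matrixP => i j; rewrite !mxE -complexE.
have Ec : cj p = cplx a - 'i *: cplx b.
  apply/matrixP => i j; rewrite !mxE {1}[p i j]complexE conjC_rect //.
    by apply/complex_realP; eexists.
  by apply/complex_realP; eexists.
have PS : (cplx (Pm c th))^T = cplx (Pm c th) by rewrite map_trmx Pm_sym.
have key : HH c th p p = ((Bt c th a a + Bt c th b b)%:C)%C.
  rewrite HH_ss Ec {1}Ep ssDl !ssDr !ssNr !ssZl !ssZr (ss_sym _ (cplx b) PS) !ss_cplx.
  have i2 : ('i : R[i]) * 'i = -1 by rewrite -expr2 sqrCi.
  rewrite /ss -!Bt_mat rmorphD /=.
  by rewrite mulrA i2 mulN1r opprK addrA subrK.
have Bge0 : forall x, 0 <= Bt c th x x.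
  move=> x; have [->|x0] := eqVneq x 0; last exact/ltW/pos.
  by rewrite /Bt killing0l oppr0.
have ab : (a != 0) || (b != 0).
  apply: contraTT p0; rewrite negb_or !negbK => /andP [/eqP a0 /eqP b0].
  by rewrite Ep a0 b0 !cplx0 scaler0 addr0.
rewrite key; apply/eqP => /(congr1 (@complex.Re R)) /=; apply/eqP.
case/orP: ab => [a0|b0].
  by apply: lt0r_neq0; apply: ltr_pwDl; [exact: pos|exact: Bge0].
by apply: lt0r_neq0; apply: ltr_pwDr; [exact: pos|exact: Bge0].
Qed.


Lemma lbrZl (R : realType) n (c : cst R n) a x y : lbr c (a *: x) y = a *: lbr c x y.
Proof. by rewrite !lbr_adm !adm_admg admgZ scalemxAr. Qed.
Lemma lbrZr (R : realType) n (c : cst R n) a x y : lbr c x (a *: y) = a *: lbr c x y.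
Proof. by rewrite !lbr_adm scalemxAl. Qed.
Lemma lbrNl (R : realType) n (c : cst R n) x y : lbr c (- x) y = - lbr c x y.
Proof. by rewrite -scaleN1r lbrZl scaleN1r. Qed.
Lemma lbr_suml (R : realType) n (c : cst R n) (I : Type) (r : seq I) (P : pred I) f y :
  lbr c (\sum_(i <- r | P i) f i) y = \sum_(i <- r | P i) lbr c (f i) y.
Proof. by rewrite lbr_adm adm_admg admg_sum mulmx_sumr; apply: eq_bigr => i _; rewrite lbr_adm adm_admg. Qed.
Lemma lbr_sumr (R : realType) n (c : cst R n) (I : Type) (r : seq I) (P : pred I) f x :
  lbr c x (\sum_(i <- r | P i) f i) = \sum_(i <- r | P i) lbr c x (f i).
Proof. by rewrite lbr_adm mulmx_suml; apply: eq_bigr => i _; rewrite lbr_adm. Qed.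

Definition Mm (R : realType) n (th : 'M[R]_n) : 'M[R]_n := 1%:M - th.
Definition Mb (R : realType) n (th : 'M[R]_n) (i : 'I_n) : 'rV[R]_n := delta_mx 0 i *m Mm th.
Definition gg (R : realType) n (c : cst R n) th (ij : 'I_n * 'I_n) := lbr c (Mb th ij.1) (Mb th ij.2).
Definition SS (R : realType) n (c : cst R n) th : 'M[R]_n :=
  (\sum_(ij : 'I_n * 'I_n) <<gg c th ij>>)%MS.

Definition inm (R : realType) n (th : 'M[R]_n) (v : 'rV[R]_n) := v *m th = - v.
Definition ink (R : realType) n (th : 'M[R]_n) (v : 'rV[R]_n) := v *m th = v.

Lemma Mm_inm (R : realType) n (th : 'M[R]_n) v : th *m th = 1%:M -> (v <= Mm th)%MS -> inm th v.
Proof.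
move=> Hs /submxP [z ->]; rewrite /inm /Mm -mulmxA mulmxBl mul1mx Hs.
by rewrite -opprB mulmxN.
Qed.

Lemma inm_Mm (R : realType) n (th : 'M[R]_n) v : inm th v -> (v <= Mm th)%MS.
Proof.
move=> H; apply/submxP; exists ((2 : R)^-1 *: v).
rewrite /Mm -scalemxAl mulmxBr mulmx1 H opprK -mulr2n -scaler_nat scalerA mulVf ?scale1r //.
by rewrite pnatr_eq0.
Qed.

Lemma gen_sub (R : realType) n (c : cst R n) th ij : (gg c th ij <= SS c th)%MS.
Proof. by apply: (sumsmx_sup ij) => //; rewrite genmxE. Qed.

Lemma S_char (R : realType) n (c : cst R n) th v : (v <= SS c th)%MS ->
  exists r : 'I_n * 'I_n -> R, v = \sum_ij r ij *: gg c th ij.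
Proof.
case/sub_sumsmxP => u ->.
have H : forall ij, exists a, u ij *m <<gg c th ij>>%MS == a *: gg c th ij.
  move=> ij; have : (u ij *m <<gg c th ij>> <= gg c th ij)%MS.
    by apply: submx_trans (submxMl _ _) _; rewrite genmxE.
  by case/sub_rVP => a ->; exists a.
exists (fun ij => xchoose (H ij)); apply: eq_bigr => ij _.
exact/eqP/(xchooseP (H ij)).
Qed.

Lemma br_th (R : realType) n (c : cst R n) S : is_aut c S ->
  forall a b, lbr c a b *m S = lbr c (a *m S) (b *m S).
Proof. by move=> [_ H] a b; rewrite H. Qed.

Lemma Mb_inm (R : realType) n (th : 'M[R]_n) i : th *m th = 1%:M -> inm th (Mb th i).
Proof. by move=> Hs; apply: Mm_inm => //; rewrite submxMl. Qed.

Lemma S_ink (R : realType) n (c : cst R n) th : is_invol c th ->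
  forall v, (v <= SS c th)%MS -> ink th v.
Proof.
move=> [Ha Hs] v /S_char [r ->]; rewrite /ink mulmx_suml; apply: eq_bigr => ij _.
by rewrite -scalemxAl /gg br_th // !Mb_inm // lbrNl lbrNr opprK.
Qed.

Lemma rowv_Mb (R : realType) n (th : 'M[R]_n) (v : 'rV[R]_n) : (v <= Mm th)%MS ->
  exists z : 'rV[R]_n, v = \sum_i z 0 i *: Mb th i.
Proof.
case/submxP => z ->; exists z; rewrite mulmx_sum_row; apply: eq_bigr => i _.
by rewrite rowE.
Qed.

Lemma mm_S (R : realType) n (c : cst R n) th : th *m th = 1%:M ->
  forall a b, inm th a -> inm th b -> (lbr c a b <= SS c th)%MS.
Proof.
move=> Hs a b /inm_Mm /rowv_Mb [za ->] /inm_Mm /rowv_Mb [zb ->].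
rewrite lbr_suml; apply: summx_sub => i _; rewrite lbr_sumr; apply: summx_sub => j _.
rewrite lbrZl lbrZr; do 2 apply: scalemx_sub.
exact: (gen_sub c th (i, j)).
Qed.

Lemma lbr_der (R : realType) n (c : cst R n) : is_lie c ->
  forall Y u v, lbr c Y (lbr c u v) = lbr c (lbr c Y u) v + lbr c u (lbr c Y v).
Proof.
move=> L Y u v; rewrite !lbr_adm -mulmxA adm_der // mulmxDr mulmxA.
by [].
Qed.

Lemma br_kk (R : realType) n (c : cst R n) th : is_aut c th ->
  forall a b, ink th a -> ink th b -> ink th (lbr c a b).
Proof. by move=> A a b ha hb; rewrite /ink br_th // ha hb. Qed.
Lemma br_km (R : realType) n (c : cst R n) th : is_aut c th ->
  forall a b, ink th a -> inm th b -> inm th (lbr c a b).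
Proof. by move=> A a b ha hb; rewrite /inm br_th // ha hb lbrNr. Qed.
Lemma br_mk (R : realType) n (c : cst R n) th : is_aut c th ->
  forall a b, inm th a -> ink th b -> inm th (lbr c a b).
Proof. by move=> A a b ha hb; rewrite /inm br_th // ha hb lbrNl. Qed.

Lemma decomp_km (R : realType) n (th : 'M[R]_n) : th *m th = 1%:M ->
  forall x : 'rV[R]_n, exists xk xm, [/\ x = xk + xm, ink th xk & inm th xm].
Proof.
move=> Hs x; exists ((2 : R)^-1 *: (x + x *m th)), ((2 : R)^-1 *: (x - x *m th)).
have h2 : (2 : R) != 0 by rewrite pnatr_eq0.
split.
- rewrite -scalerDr addrACA subrr addr0 -mulr2n -scaler_nat scalerA mulVf //.
  by rewrite scale1r.
- by rewrite /ink -scalemxAl mulmxDl -mulmxA Hs mulmx1 addrC.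
- by rewrite /inm -scalemxAl mulmxBl -mulmxA Hs mulmx1 -scalerN opprB.
Qed.

Lemma kS_S (R : realType) n (c : cst R n) th : is_lie c -> is_invol c th ->
  forall z s, ink th z -> (s <= SS c th)%MS -> (lbr c z s <= SS c th)%MS.
Proof.
move=> L [Ha Hs] z s hz /S_char [r ->].
rewrite lbr_sumr; apply: summx_sub => ij _; rewrite lbrZr; apply: scalemx_sub.
rewrite /gg lbr_der //; apply: addmx_sub; apply: mm_S => //;
  first [exact: Mb_inm | apply: br_km => //; exact: Mb_inm].
Qed.

Lemma U_ideal (R : realType) n (c : cst R n) th : is_lie c -> is_invol c th ->
  ideal c (Mm th + SS c th)%MS.
Proof.
move=> L [Ha Hs] x y /sub_addsmxP [[u1 u2] /= ->].
have hp : inm th (u1 *m Mm th) by apply: Mm_inm; rewrite // submxMl.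
have hs : ink th (u2 *m SS c th) by apply: (S_ink (conj Ha Hs)); rewrite submxMl.
have [xk [xm [-> hk hm]]] := decomp_km Hs x.
have inU1 : forall v, inm th v -> (v <= Mm th + SS c th)%MS.
  by move=> v hv; apply: submx_trans (inm_Mm hv) (addsmxSl (Mm th) (SS c th)).
have inU2 : forall v : 'rV[R]_n, (v <= SS c th)%MS -> (v <= Mm th + SS c th)%MS.
  by move=> v hv; rewrite (submx_trans hv) // addsmxSr.
rewrite lbrDl !lbrDr; apply: addmx_sub; apply: addmx_sub.
- by apply: inU1; apply: br_km.
- by apply: inU2; apply: kS_S => //; rewrite submxMl.
- by apply: inU2; apply: mm_S.
- by apply: inU1; apply: br_mk.
Qed.

Lemma U_stable (R : realType) n (c : cst R n) th sg : is_lie c -> is_invol c th ->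
  is_invol c sg -> th *m sg = sg *m th -> stable sg (Mm th + SS c th)%MS.
Proof.
move=> L [Ha Hs] [Sa Ss] com y /sub_addsmxP [[u1 u2] /= ->].
rewrite mulmxDl; apply: addmx_sub.
  apply: submx_trans (addsmxSl (Mm th) (SS c th)); apply: inm_Mm.
  have hp : inm th (u1 *m Mm th) by apply: Mm_inm; rewrite // submxMl.
  by rewrite /inm -mulmxA -com mulmxA hp mulNmx.
apply: submx_trans (addsmxSr (Mm th) (SS c th)).
have [r ->] := S_char (submxMl u2 (SS c th)).
rewrite mulmx_suml; apply: summx_sub => ij _; rewrite -scalemxAl; apply: scalemx_sub.
rewrite /gg br_th //; apply: mm_S => //.
  by rewrite /inm -mulmxA -com mulmxA Mb_inm // mulNmx.
by rewrite /inm -mulmxA -com mulmxA Mb_inm // mulNmx.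
Qed.

Lemma k_in_S (R : realType) n (c : cst R n) th sg : is_lie c ->
  cartan_invol c th -> is_invol c sg -> th *m sg = sg *m th ->
  ~ compact_lie c -> no_sigma_ideals c sg ->
  forall z, ink th z -> (z <= SS c th)%MS.
Proof.
move=> L [[Ha Hs] pos] Si com ncp nsi z hz.
case: (nsi _ (U_ideal L (conj Ha Hs)) (U_stable L (conj Ha Hs) Si com)) => [/eqP|] rU.
  exfalso; apply: ncp; move: rU; rewrite mxrank_eq0 => /eqP U0.
  have : (Mm th <= Mm th + SS c th)%MS by exact: addsmxSl.
  rewrite U0 submx0 /Mm subr_eq0 => /eqP th1.
  by move=> x x0; have := pos x x0; rewrite -th1 mulmx1 oppr_gt0.
have : (z <= Mm th + SS c th)%MS by apply: submx_full; rewrite /row_full rU.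
case/sub_addsmxP => [[u1 u2] /= Ez].
have hp : inm th (u1 *m Mm th) by apply: Mm_inm; rewrite // submxMl.
have hs : ink th (u2 *m SS c th) by apply: (S_ink (conj Ha Hs)); rewrite submxMl.
have p0 : u1 *m Mm th = 0.
  have hk : ink th (u1 *m Mm th).
    have -> : u1 *m Mm th = z - u2 *m SS c th by rewrite Ez addrK.
    by rewrite /ink mulmxBl hz hs.
  have : (2 : R) *: (u1 *m Mm th) = 0.
    by rewrite scaler_nat mulr2n -{1}hk hp addNr.
  by move/eqP; rewrite scaler_eq0 pnatr_eq0 /= => /eqP.
by rewrite Ez p0 add0r submxMl.
Qed.


Lemma eig_restr (F : closedFieldType) n (W A : 'M[F]_n) :
  (0 < \rank W)%N -> (W *m A <= W)%MS ->
  exists2 w : 'rV_n, (w != 0) && (w <= W)%MS & exists l, w *m A = l *: w.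
Proof.
move=> rW sWA.
set Wb := row_base W.
have sWbA : (Wb *m A <= Wb)%MS.
  by rewrite /Wb (eqmxMr A (eq_row_base W)) eq_row_base.
set A' := Wb *m A *m pinvmx Wb.
have EA : A' *m Wb = Wb *m A by rewrite mulmxKpV.
have : size (char_poly A') != 1%N by rewrite size_char_poly eqSS -lt0n.
case/closed_rootP => l; rewrite -eigenvalue_root_char => /eigenvalueP [v vA v0].
exists (v *m Wb).
  rewrite mulmx_free_eq0 ?row_base_free // v0 /=.
  by rewrite -(eq_row_base W) submxMl.
by exists l; rewrite -mulmxA -EA mulmxA vA scalemxAl.
Qed.

Lemma common_eig (F : closedFieldType) n (As : seq 'M[F]_n) : forall (W : 'M[F]_n),
  (0 < \rank W)%N -> (forall A, A \in As -> (W *m A <= W)%MS) ->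
  (forall A B, A \in As -> B \in As -> A *m B = B *m A) ->
  exists2 w : 'rV_n, (w != 0) && (w <= W)%MS & forall A, A \in As -> exists l, w *m A = l *: w.
Proof.
elim: As => [|A As IH] W rW sW cW.
  have [w Hw _] := @eig_restr F n W 0 rW ltac:(by rewrite mulmx0 sub0mx).
  by exists w => // A; rewrite in_nil.
have [w /andP [w0 wW] [l wA]] := eig_restr rW (sW A (mem_head _ _)).
set W' := (W :&: kermx (A - l%:M))%MS.
have wW' : (w <= W')%MS.
  by rewrite sub_capmx wW sub_kermx mulmxBr wA mul_mx_scalar /=; apply/eqP; apply: subrr.
have rW' : (0 < \rank W')%N.
  by apply: leq_trans (mxrankS wW'); rewrite rank_rV lt0b.
have sW' : forall B, B \in As -> (W' *m B <= W')%MS.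
  move=> B BAs; apply/row_subP => i; rewrite row_mul.
  have : (row i W' <= W')%MS by exact: row_sub.
  rewrite sub_capmx => /andP [vW vK].
  rewrite sub_capmx; apply/andP; split.
    apply: submx_trans (submxMr B vW) _; apply: sW; by rewrite in_cons BAs orbT.
  rewrite sub_kermx -mulmxA mulmxBr mul_mx_scalar (cW B A); last 2 first.
  - by rewrite in_cons BAs orbT.
  - exact: mem_head.
  rewrite -mul_scalar_mx -mulmxBl mulmxA.
  by move: vK; rewrite sub_kermx => /eqP ->; rewrite mul0mx.
have [w' /andP [w'0 w'W'] Hw'] := IH W' rW' sW' (fun A0 B a b => cW A0 B ltac:(by rewrite in_cons a orbT) ltac:(by rewrite in_cons b orbT)).
exists w'; first by rewrite w'0 (submx_trans w'W') ?capmxSl.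
move=> B; rewrite in_cons => /orP [/eqP ->|BAs]; last exact: Hw'.
exists l; move: w'W'; rewrite sub_capmx sub_kermx mulmxBr mul_mx_scalar => /andP [_].
by rewrite subr_eq0 => /eqP.
Qed.


Lemma conj_imag (R : realType) (z : R[i]) : complex.Re z = 0 -> z^* = - z.
Proof.
case: z => a b /= ->; apply/eqP; rewrite eq_complex /=.
by rewrite oppr0 !eqxx.
Qed.

Lemma scale_inj (F : fieldType) n (a b : F) (w : 'rV[F]_n) : w != 0 -> a *: w = b *: w -> a = b.
Proof.
move=> w0 /eqP; rewrite -subr_eq0 -scalerBl scaler_eq0 (negbTE w0) orbF subr_eq0.
by move/eqP.
Qed.

Lemma lbrC_der (R : realType) n (c : cst R n) : is_lie c ->
  forall y u v, lbrC c (cplx y) (lbrC c u v) =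
    lbrC c (lbrC c (cplx y) u) v + lbrC c u (lbrC c (cplx y) v).
Proof.
move=> L y u v; rewrite !lbrC_admC admC_cplx -mulmxA admC_der // mulmxDr mulmxA.
by [].
Qed.

Lemma lbrCZl (R : realType) n (c : cst R n) a u v : lbrC c (a *: u) v = a *: lbrC c u v.
Proof. by rewrite !lbrC_admC /admC admgZ scalemxAr. Qed.
Lemma lbrCZr (R : realType) n (c : cst R n) a u v : lbrC c u (a *: v) = a *: lbrC c u v.
Proof. by rewrite !lbrC_admC scalemxAl. Qed.
Lemma lbrC0l (R : realType) n (c : cst R n) v : lbrC c 0 v = 0.
Proof. by have := lbrCZl c 0 0 v; rewrite !scale0r. Qed.

Lemma in_gC_br (R : realType) n (c : cst R n) T b g u v : is_lie c ->
  in_gC c T b u -> in_gC c T g v -> in_gC c T (fun y => b y + g y) (lbrC c u v).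
Proof.
move=> L hu hv y yT; rewrite lbrC_der // hu // hv // lbrCZl lbrCZr.
by rewrite scalerDl.
Qed.

Lemma in_gC_adm (R : realType) n (c : cst R n) T b u :
  in_gC c T b u <-> forall y, (y <= T)%MS -> u *m cplx (adm c y) = b y *: u.
Proof.
by split => H y yT; have := H y yT; rewrite lbrC_admC admC_cplx.
Qed.

Lemma ortho_w (R : realType) n (c : cst R n) th T b d x w : is_lie c -> is_invol c th ->
  (forall y : 'rV[R]_n, (y <= T)%MS -> y *m th = y) -> lin_form T d ->
  in_gC c T b x -> in_gC c T d w ->
  forall y, (y <= T)%MS -> b y != d y -> HH c th x w = 0.
Proof.
move=> L I HT [_ [_ Red]] hx hw y yT bd.
have E := HH_skew L I (HT y yT) x w.
move/in_gC_adm: hx => hx; move/in_gC_adm: hw => hw.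
rewrite hx // hw // HHZl HHZr conj_imag ?Red // mulNr opprK in E.
move/eqP: E; rewrite -subr_eq0 -mulrBl mulf_eq0 subr_eq0 (negbTE bd) /=.
by move/eqP.
Qed.

Lemma nz_entry (F : comNzRingType) n (w : 'rV[F]_n) : w != 0 -> exists j, w 0 j != 0.
Proof.
move=> w0; apply: NNPP => H; move/eqP: w0; apply; apply/rowP => j.
rewrite [RHS]mxE; apply/eqP; apply: NNPP => hj; apply: H; exists j; exact/negP.
Qed.

Lemma eig_weight (R : realType) n (c : cst R n) th T w : is_lie c -> cartan_invol c th ->
  (forall y : 'rV[R]_n, (y <= T)%MS -> y *m th = y) -> w != 0 ->
  (forall y, (y <= T)%MS -> exists mu, w *m cplx (adm c y) = mu *: w) ->
  exists b, lin_form T b /\ in_gC c T b w.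
Proof.
move=> L [I pos] HT w0 Hw.
have [j wj] := nz_entry w0.
pose b y := (w *m cplx (adm c y)) 0 j / w 0 j.
have hb : forall y, (y <= T)%MS -> w *m cplx (adm c y) = b y *: w.
  move=> y yT; have [mu E] := Hw y yT.
  by rewrite /b E mxE mulfK.
exists b; split; last by apply/in_gC_adm.
split; [|split].
- move=> y z _ _; rewrite /b !adm_admg admgD cplxD mulmxDr mxE mulrDl.
  by [].
- move=> r y _; rewrite /b !adm_admg admgZ cplxZ -scalemxAr mxE mulrA.
  by [].
- move=> y yT.
  have E := HH_skew L I (HT y yT) w w.
  rewrite hb // HHZl HHZr in E.
  move/eqP: E; rewrite -subr_eq0 -mulNr -mulrBl opprK mulf_eq0 (negbTE (HH_nz (conj I pos) w0)) orbF.
  move=> /eqP E; have : 2 * ((complex.Re (b y))%:C)%C = 0 by rewrite -addcJ.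
  move/eqP; rewrite mulf_eq0 pnatr_eq0 /= => /eqP.
  by move/(congr1 (@complex.Re R)).
Qed.

Definition inmC (R : realType) n (th : 'M[R]_n) (u : 'rV[R[i]]_n) := u *m cplx th = - u.
Definition wv (R : realType) n (c : cst R n) th T (u : 'rV[R[i]]_n) :=
  inmC th u /\ exists b, lin_form T b /\ in_gC c T b u.
Definition spanF (R : realType) n k (f : 'I_k -> 'rV[R[i]]_n) : 'M[R[i]]_n :=
  (\sum_(i < k) <<f i>>)%MS.

Lemma wvZ (R : realType) n (c : cst R n) th T a u : wv c th T u -> wv c th T (a *: u).
Proof.
move=> [hu [b [lb gb]]]; split; first by rewrite /inmC -scalemxAl hu scalerN.
exists b; split => // y yT; rewrite lbrCZr gb // !scalerA.
by rewrite mulrC.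
Qed.

Lemma span_char (R : realType) n k (f : 'I_k -> 'rV[R[i]]_n) u : (u <= spanF f)%MS ->
  exists a : 'I_k -> R[i], u = \sum_i a i *: f i.
Proof.
case/sub_sumsmxP => v ->.
have H : forall i, exists a, v i *m <<f i>>%MS == a *: f i.
  move=> i; have : (v i *m <<f i>> <= f i)%MS.
    by apply: submx_trans (submxMl _ _) _; rewrite genmxE.
  by case/sub_rVP => a ->; exists a.
exists (fun i => xchoose (H i)); apply: eq_bigr => i _.
exact/eqP/(xchooseP (H i)).
Qed.

Definition ext (T : Type) k (f : 'I_k -> T) (e : T) : 'I_k.+1 -> T :=
  fun i => if unlift ord_max i is Some j then f j else e.

Lemma maxfam (R : realType) n (c : cst R n) th T d : forall k (f : 'I_k -> 'rV[R[i]]_n),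
  (forall i, wv c th T (f i)) -> (n - \rank (spanF f) <= d)%N ->
  exists k' (f' : 'I_k' -> 'rV[R[i]]_n),
    (forall i, wv c th T (f' i)) /\ forall e, wv c th T e -> (e <= spanF f')%MS.
Proof.
elim: d => [|d IH] k f hf hd.
  exists k, f; split => // e _; apply: submx_full.
  by rewrite /row_full eqn_leq rank_leq_col /= -subn_eq0 -leqn0.
case: (classic (forall e, wv c th T e -> (e <= spanF f)%MS)) => [H|H].
  by exists k, f.
have [e [he ne]] : exists e, wv c th T e /\ ~~ (e <= spanF f)%MS.
  apply: NNPP => H'; apply: H => e he; apply: NNPP => ne; apply: H'.
  by exists e; split => //; apply/negP.
have hf' : forall i, wv c th T (ext f e i).
  by move=> i; rewrite /ext; case: unliftP.
apply: (IH _ (ext f e) hf').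
have s1 : (spanF f <= spanF (ext f e))%MS.
  apply/sumsmx_subP => i _; apply: (sumsmx_sup (lift ord_max i)) => //.
  by rewrite /ext liftK.
have s2 : (e <= spanF (ext f e))%MS.
  apply: (sumsmx_sup ord_max) => //; rewrite /ext unlift_none genmxE.
  exact: submx_refl.
have lt : (spanF f < spanF (ext f e))%MS.
  rewrite ltmxE s1 /=; apply: contra ne => h; exact: submx_trans s2 h.
have h1 := rank_ltmx lt; have h2 := rank_leq_col (spanF (ext f e)).
lia.
Qed.

Lemma cplx_sum (R : realType) m p (I : Type) (r : seq I) (P : pred I) (F : I -> 'M[R]_(m, p)) :
  cplx (\sum_(i <- r | P i) F i) = \sum_(i <- r | P i) cplx (F i).
Proof. exact: (big_morph _ (@cplxD R m p) (@cplx0 R m p)). Qed.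

Lemma adm_sum (R : realType) n (c : cst R n) (I : Type) (r : seq I) (P : pred I) (F : I -> 'rV[R]_n) :
  adm c (\sum_(i <- r | P i) F i) = \sum_(i <- r | P i) adm c (F i).
Proof. by rewrite adm_admg admg_sum; apply: eq_bigr => i _; rewrite adm_admg. Qed.

Lemma admZ (R : realType) n (c : cst R n) a x : adm c (a *: x) = a *: adm c x.
Proof. by rewrite !adm_admg admgZ. Qed.

Lemma cplx_th2 (R : realType) n (th : 'M[R]_n) : th *m th = 1%:M -> cplx th *m cplx th = 1%:M.
Proof. by move=> H; rewrite -cplxM H cplx1. Qed.

Lemma Mc_inm (R : realType) n (th : 'M[R]_n) v : th *m th = 1%:M ->
  (v <= cplx (Mm th))%MS -> inmC th v.
Proof.
move=> Hs /submxP [z ->]; rewrite /inmC /Mm cplxD cplxN cplx1 -mulmxA mulmxBl mul1mx.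
by rewrite cplx_th2 // -opprB mulmxN.
Qed.

Lemma inm_Mc (R : realType) n (th : 'M[R]_n) v : inmC th v -> (v <= cplx (Mm th))%MS.
Proof.
move=> H; apply/submxP; exists ((2 : R[i])^-1 *: v).
rewrite /Mm cplxD cplxN cplx1 -scalemxAl mulmxBr mulmx1 H opprK.
have -> : v + v = (2 : R[i]) *: v by rewrite scaler_nat mulr2n.
by rewrite scalerA mulVf ?scale1r // pnatr_eq0.
Qed.

Lemma span_full (R : realType) n (c : cst R n) th T k (f : 'I_k -> 'rV[R[i]]_n) :
  is_lie c -> cartan_invol c th ->
  (forall y : 'rV[R]_n, (y <= T)%MS -> y *m th = y) -> abelian_sub c T ->
  (forall i, wv c th T (f i)) -> (forall e, wv c th T e -> (e <= spanF f)%MS) ->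
  forall u, inmC th u -> (u <= spanF f)%MS.
Proof.
move=> L [[Ha Hs] pos] HT Hab hf hmax u hu; apply: NNPP => nu.
pose V := spanF f; pose Mc := cplx (Mm th).
pose Q := cplx (Pm c th) *m (cj V)^T; pose W := (Mc :&: kermx Q)%MS.
have VMc : (V <= Mc)%MS.
  apply/sumsmx_subP => i _; rewrite genmxE; exact: inm_Mc (hf i).1.
have rVlt : (\rank V < \rank Mc)%N.
  apply: rank_ltmx; rewrite ltmxE VMc /=; apply/negP => h; apply: nu.
  exact: submx_trans (inm_Mc hu) h.
have rQ : (\rank Q <= \rank V)%N.
  by apply: leq_trans (mxrankM_maxr _ _) _; rewrite mxrank_tr mxrank_map.
have rW : (0 < \rank W)%N.
  have h1 := mxrank_sum_cap Mc (kermx Q); have h2 := rank_leq_col (Mc + kermx Q)%MS.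
  have h3 := mxrank_ker Q; rewrite /W; lia.
pose As := [seq cplx (adm c (row i T)) | i <- enum 'I_n].
have memAs : forall A, A \in As -> exists2 y, (y <= T)%MS & A = cplx (adm c y).
  by move=> A /mapP [i _ ->]; exists (row i T) => //; exact: row_sub.
have commTh : forall y, (y <= T)%MS -> cplx (adm c y) *m cplx th = cplx th *m cplx (adm c y).
  by move=> y yT; rewrite -!cplxM adm_comm_th // HT.
have stabV : forall y, (y <= T)%MS -> (V *m cplx (adm c y) <= V)%MS.
  move=> y yT; rewrite /V /spanF sumsmxMr; apply/sumsmx_subP => i _.
  rewrite (eqmxMr _ (genmxE _)).
  have [_ [b [_ gb]]] := hf i; move/in_gC_adm: gb => gb; rewrite gb //.
  apply: scalemx_sub; apply: (sumsmx_sup i) => //; rewrite genmxE; exact: submx_refl.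
have stabW : forall A, A \in As -> (W *m A <= W)%MS.
  move=> A /memAs [y yT ->]; apply/row_subP => j; rewrite row_mul.
  have : (row j W <= W)%MS by exact: row_sub.
  rewrite sub_capmx => /andP [vMc vK].
  rewrite sub_capmx; apply/andP; split.
    apply: inm_Mc; rewrite /inmC -mulmxA commTh // mulmxA (Mc_inm Hs vMc) mulNmx.
    by [].
  move: vK; rewrite !sub_kermx /Q => /eqP vQ.
  have [D ED] := submxP (stabV y yT).
  have key : cplx (adm c y) *m cplx (Pm c th) = - (cplx (Pm c th) *m (cplx (adm c y))^T).
    by rewrite -cplxM Pm_skew // ?HT // cplxN cplxM map_trmx.
  have key2 : (cplx (adm c y))^T *m (cj V)^T = (cj V)^T *m (cj D)^T.
    by rewrite -!trmx_mul -(cj_cplx (adm c y)) -cjM ED cjM.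
  rewrite !mulmxA -(mulmxA _ (cplx (adm c y))) key mulmxN mulNmx.
  rewrite -!mulmxA key2 !mulmxA -(mulmxA (row j W)) vQ mul0mx oppr0.
  by [].
have commAs : forall A B, A \in As -> B \in As -> A *m B = B *m A.
  move=> A B /memAs [y1 y1T ->] /memAs [y2 y2T ->].
  rewrite -!cplxM adm_der // -lbr_adm Hab // adm_admg admg0 add0r.
  by [].
have [w /andP [w0 wW] hw] := common_eig rW stabW commAs.
pose Pl (i : 'I_n) := [pred l | w *m cplx (adm c (row i T)) == l *: w].
have hl : forall i, exists l, Pl i l.
  move=> i; have [l hl] := hw (cplx (adm c (row i T))) (map_f _ (mem_enum _ i)).
  by exists l; rewrite inE hl.
have weig : forall y, (y <= T)%MS -> exists mu, w *m cplx (adm c y) = mu *: w.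
  move=> y /submxP [d ->]; exists (\sum_i ((d 0 i)%:C)%C * xchoose (hl i)).
  rewrite (mulmx_sum_row d T) adm_sum cplx_sum mulmx_sumr scaler_suml; apply: eq_bigr => i _.
  have := xchooseP (hl i); rewrite inE => /eqP E.
  by rewrite admZ cplxZ -scalemxAr E scalerA.
move: wW; rewrite sub_capmx sub_kermx => /andP [wMc /eqP wQ].
have [b [lb gb]] := eig_weight L (conj (conj Ha Hs) pos) HT w0 weig.
have : (w <= V)%MS by apply: hmax; split => //; [exact: Mc_inm | exists b].
case/submxP => d Ew.
have : HH c th w w = 0.
  rewrite /HH {2}Ew cjM trmx_mul !mulmxA -(mulmxA w) wQ mul0mx mxE.
  by [].
by move/eqP; rewrite (negbTE (HH_nz (conj (conj Ha Hs) pos) w0)).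
Qed.

Lemma reim (R : realType) m p (x : 'M[R[i]]_(m, p)) :
  x = cplx (map_mx (@complex.Re R) x) + 'i *: cplx (map_mx (@complex.Im R) x).
Proof. by apply/matrixP => i j; rewrite !mxE -complexE. Qed.

Lemma Re_of (R : realType) m p (a b : 'M[R]_(m, p)) :
  map_mx (@complex.Re R) (cplx a + 'i *: cplx b) = a.
Proof. by apply/matrixP => i j; rewrite !mxE /= ?(mul0r, mulr0, mul1r, mulr1, subr0, addr0, add0r, sub0r). Qed.

Lemma Im_of (R : realType) m p (a b : 'M[R]_(m, p)) :
  map_mx (@complex.Im R) (cplx a + 'i *: cplx b) = b.
Proof. by apply/matrixP => i j; rewrite !mxE /= ?(mul0r, mulr0, mul1r, mulr1, subr0, addr0, add0r, sub0r). Qed.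

Lemma lbrC_suml (R : realType) n (c : cst R n) (I : Type) (r : seq I) (P : pred I) f y :
  lbrC c (\sum_(i <- r | P i) f i) y = \sum_(i <- r | P i) lbrC c (f i) y.
Proof. by rewrite lbrC_admC /admC admg_sum mulmx_sumr; apply: eq_bigr => i _; rewrite lbrC_admC. Qed.
Lemma lbrC_sumr (R : realType) n (c : cst R n) (I : Type) (r : seq I) (P : pred I) f x :
  lbrC c x (\sum_(i <- r | P i) f i) = \sum_(i <- r | P i) lbrC c x (f i).
Proof. by rewrite lbrC_admC mulmx_suml; apply: eq_bigr => i _; rewrite lbrC_admC. Qed.
Lemma lbrC0r (R : realType) n (c : cst R n) v : lbrC c v 0 = 0.
Proof. by have := lbrCZr c 0 v 0; rewrite !scale0r. Qed.

Lemma lin_form_add (R : realType) n (T : 'M[R]_n) b g : lin_form T b -> lin_form T g ->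
  lin_form T (fun y => b y + g y).
Proof.
move=> [b1 [b2 b3]] [g1 [g2 g3]]; split; [|split].
- by move=> y z yT zT; rewrite b1 // g1 // addrACA.
- by move=> r y yT; rewrite b2 // g2 // mulrDr.
- by move=> y yT; rewrite raddfD /= b3 // g3 // addr0.
Qed.

Lemma exist_fun (A : Type) (B : Type) (P : A -> B -> Prop) :
  (forall a, exists b, P a b) -> exists f : A -> B, forall a, P a (f a).
Proof.
move=> H; exists (fun a => proj1_sig (constructive_indefinite_description _ (H a))).
by move=> a; exact: proj2_sig (constructive_indefinite_description _ (H a)).
Qed.

Theorem lemma1 (R : realType) (n : nat) (c : cst R n)
    (th sg T : 'M[R]_n) :
  is_lie c -> semisimple c ->
  cartan_invol c th -> is_invol c sg -> th *m sg = sg *m th ->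
  max_abelian_kq c th sg T ->
  ~ compact_lie c -> no_sigma_ideals c sg ->
  forall a : 'rV[R]_n -> complex R,
    in_Sigma c T a -> kC_nz c th T a ->
    exists b g : 'rV[R]_n -> complex R,
      (in_Sigma_m c th T b \/ form_zero T b) /\
      (in_Sigma_m c th T g \/ form_zero T g) /\
      (forall y : 'rV[R]_n, (y <= T)%MS -> a y = b y + g y).
Proof.
move=> L _ Cart Sgi com [Tkq [Hab _]] ncp nsi a [la [nza _]] [x [x0 [gx kx]]].
have [[Ha Hs] pos] := Cart.
have HT : forall y : 'rV[R]_n, (y <= T)%MS -> y *m th = y.
  by move=> y yT; case: (Tkq y yT).
have [K [f [hf hmax]]] : exists K (f : 'I_K -> 'rV[R[i]]_n),
    (forall i, wv c th T (f i)) /\ forall e, wv c th T e -> (e <= spanF f)%MS.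
  apply: (@maxfam R n c th T n 0 (fun _ => 0)); first by case.
  exact: leq_subr.
have hspan := span_full L Cart HT Hab hf hmax.
have [al hal] : exists al : 'I_n -> 'I_K -> R[i],
    forall i, cplx (Mb th i) = \sum_k al i k *: f k.
  apply: (@exist_fun _ _ (fun i (g : 'I_K -> R[i]) => cplx (Mb th i) = \sum_k g k *: f k)) => i.
  apply: span_char; apply: hspan.
  by rewrite /inmC -cplxM Mb_inm // cplxN.
have hgg : forall ij, cplx (gg c th ij) =
    \sum_k \sum_l (al ij.1 k * al ij.2 l) *: lbrC c (f k) (f l).
  move=> [i j]; rewrite /gg -lbrC_cplx /= !hal lbrC_suml; apply: eq_bigr => k _.
  by rewrite lbrCZl lbrC_sumr scaler_sumr; apply: eq_bigr => l _; rewrite lbrCZr scalerA.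
set a0 := map_mx (@complex.Re R) x; set b0 := map_mx (@complex.Im R) x.
have Ex : x = cplx a0 + 'i *: cplx b0 by exact: reim.
have ka : ink th a0 /\ ink th b0.
  have E : cplx (a0 *m th) + 'i *: cplx (b0 *m th) = cplx a0 + 'i *: cplx b0.
    by rewrite !cplxM scalemxAl -mulmxDl -Ex kx.
  split; [have := congr1 (map_mx (@complex.Re R)) E | have := congr1 (map_mx (@complex.Im R)) E];
    by rewrite ?Re_of ?Im_of.
have [ra Ea] := S_char (k_in_S L Cart Sgi com ncp nsi ka.1).
have [rb Eb] := S_char (k_in_S L Cart Sgi com ncp nsi ka.2).
have [k [l hkl]] : exists k l, HH c th x (lbrC c (f k) (f l)) != 0.
  apply: NNPP => H.
  have H0 : forall k l, HH c th x (lbrC c (f k) (f l)) = 0.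
    move=> k l; apply/eqP; apply: NNPP => h; apply: H; exists k, l; exact/negP.
  have Hg : forall ij, HH c th x (cplx (gg c th ij)) = 0.
    move=> ij; rewrite hgg HH_sumr big1 // => k _; rewrite HH_sumr big1 // => l _.
    by rewrite HHZr H0 mulr0.
  have : HH c th x x = 0.
    rewrite {2}Ex HHDr HHZr Ea Eb !cplx_sum !HH_sumr !big1 ?mulr0 ?addr0 // => ij _;
      by rewrite cplxZ HHZr Hg mulr0.
  by move/eqP; rewrite (negbTE (HH_nz Cart x0)).
have [mk [be [lbe gbe]]] := hf k; have [ml [ga [lga gga]]] := hf l.
have fk0 : f k != 0 by apply: contraNneq hkl => ->; rewrite lbrC0l HH0r.
have fl0 : f l != 0 by apply: contraNneq hkl => ->; rewrite lbrC0r HH0r.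
have Esum : forall y, (y <= T)%MS -> a y = be y + ga y.
  move=> y yT; apply/eqP; apply: NNPP => ne.
  have ne' : a y != be y + ga y by apply/negP.
  have := ortho_w L (conj Ha Hs) HT (lin_form_add lbe lga) gx (in_gC_br L gbe gga) yT ne'.
  by move/eqP; rewrite (negbTE hkl).
exists be, ga; split; [|split] => //.
  case: (classic (form_zero T be)) => hz; [by right | left].
  by split => //; split => //; exists (f k).
case: (classic (form_zero T ga)) => hz; [by right | left].
by split => //; split => //; exists (f l).
Qed.
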